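(* Let $S$ be a nontrivial semiring, $\Sigma$ an alphabet, $L\in\mathrm{RevL}_1(\mathbb{B},\Sigma)$, and let $\underline{L}$ be the characteristic series of $L$ over $S$. Then $\underline{L}\in\mathrm{Rev}_1(S,\Sigma)$. As a consequence, $L\in\mathrm{RevL}_1(S,\Sigma)$ and $\mathrm{RevL}_1(\mathbb{B},\Sigma)\subseteq\mathrm{RevL}_1(S,\Sigma)$.
   Context: A semiring $(S,+,\cdot,0,1)$ has $(S,+,0)$ a commutative monoid, $(S,\cdot,1)$ a monoid, two-sided distributivity and $0$ absorbing; it is nontrivial if $0\neq1$. $\mathbb{B}=(\{0,1\},\lor,\land,0,1)$ is the Boolean semiring. A series over $S$ and a finite nonempty alphabet $\Sigma$ is a map $r\colon\Sigma^*\to S$, value $(r,w)$; its support is $\mathrm{supp}(r)=\{w\mid (r,w)\neq0\}$. The characteristic series $\underline{L}$ of $L\subseteq\Sigma^*$ over $S$ has $(\underline{L},w)=1$ for $w\in L$ and $0$ otherwise. A weighted automaton over $S$ and $\Sigma$ is $\mathcal{A}=(Q,\sigma,\iota,\tau)$ with $Q$ finite, $\sigma\colon Q\times\Sigma\times Q\to S$, $\iota,\tau\colon Q\to S$; a run on $w=a_1\cdots a_t$ is $q_0a_1q_1\cdots a_tq_t$ with all $\sigma(q_{k-1},a_k,q_k)\neq0$, of weight $\iota(q_0)\sigma(q_0,a_1,q_1)\cdots\sigma(q_{t-1},a_t,q_t)\tau(q_t)$, and $(\|\mathcal{A}\|,w)$ is the sum of weights of runs on $w$. $\mathcal{A}$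 is reversible if for all $p,p',q,q'\in Q$, $a\in\Sigma$: $\sigma(p,a,q)\neq0\neq\sigma(p,a,q')$ implies $q=q'$, and $\sigma(p,a,q)\neq0\neq\sigma(p',a,q)$ implies $p=p'$. $\mathrm{Rev}_1(S,\Sigma)$ is the set of series realised by reversible weighted automata over $S$ and $\Sigma$ with precisely one state $q$ such that $\iota(q)\neq0$, and $\mathrm{RevL}_1(S,\Sigma)=\{\mathrm{supp}(r)\mid r\in\mathrm{Rev}_1(S,\Sigma)\}$. In particular $\mathrm{RevL}_1(\mathbb{B},\Sigma)$ is the set of languages recognised by finite automata whose transition relation is deterministic and codeterministic, with exactly one initial state and arbitrary set of final states. *)

(* Defs.v *)
From HB Require Import structures.
From mathcomp Require Import all_boot all_order all_algebra.
Set Implicit Arguments. Unset Strict Implicit. Unset Printing Implicit Defensive.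
Import GRing.Theory.
Local Open Scope ring_scope.

(* The Boolean semiring B = ({0,1}, or, and, 0, 1), as a fresh two-element
   type (an alias of bool would pick up bool's existing xor-Zmodule). *)
Variant Bsr := B0 | B1.
Definition Bsr2bool (x : Bsr) : bool := if x is B1 then true else false.
Definition bool2Bsr (b : bool) : Bsr := if b then B1 else B0.
Lemma Bsr2boolK : cancel Bsr2bool bool2Bsr. Proof. by case. Qed.
HB.instance Definition _ := Equality.copy Bsr (can_type Bsr2boolK).
HB.instance Definition _ := Choice.copy Bsr (can_type Bsr2boolK).
Definition Bor (x y : Bsr) : Bsr := if x is B1 then B1 else y.
Definition Band (x y : Bsr) : Bsr := if x is B1 then y else B0.
Lemma BorA : associative Bor. Proof. by do 3 case. Qed.
Lemma BorC : commutative Bor. Proof. by do 2 case. Qed.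
Lemma Bor0 : left_id B0 Bor. Proof. by case. Qed.
Lemma BandA : associative Band. Proof. by do 3 case. Qed.
Lemma Band1l : left_id B1 Band. Proof. by case. Qed.
Lemma Band1r : right_id B1 Band. Proof. by case. Qed.
Lemma BandDl : left_distributive Band Bor. Proof. by do 3 case. Qed.
Lemma BandDr : right_distributive Band Bor. Proof. by do 3 case. Qed.
Lemma Band0l : left_zero B0 Band. Proof. by case. Qed.
Lemma Band0r : right_zero B0 Band. Proof. by case. Qed.
Lemma B10 : B1 != B0. Proof. by []. Qed.
HB.instance Definition _ := GRing.isNzSemiRing.Build Bsr
  BorA BorC Bor0 BandA Band1l Band1r BandDl BandDr Band0l Band0r B10.

Section WA.
Variables (S : pzSemiRingType) (Sigma : finType) (Q : finType).
Variables (sigma : Q -> Sigma -> Q -> S) (iota tau : Q -> S).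

(* qs is the sequence q_1..q_t of states visited after reading each letter. *)
Fixpoint is_run (p : Q) (w : seq Sigma) (qs : seq Q) : bool :=
  match w, qs with
  | [::], [::] => true
  | a :: w', q :: qs' => (sigma p a q != 0) && is_run q w' qs'
  | _, _ => false
  end.

Fixpoint path_weight (p : Q) (w : seq Sigma) (qs : seq Q) : S :=
  match w, qs with
  | [::], [::] => tau p
  | a :: w', q :: qs' => sigma p a q * path_weight q w' qs'
  | _, _ => 0
  end.

Definition behaviour (w : seq Sigma) : S :=
  \sum_(q0 : Q) \sum_(qs : (size w).-tuple Q | is_run q0 w qs)
     iota q0 * path_weight q0 w qs.

Definition reversible : Prop :=
  (forall p q q' a, sigma p a q != 0 -> sigma p a q' != 0 -> q = q') /\
  (forall p p' q a, sigma p a q != 0 -> sigma p' a q != 0 -> p = p').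
End WA.

Definition Rev1 (S : pzSemiRingType) (Sigma : finType) (r : seq Sigma -> S) : Prop :=
  exists (Q : finType) (sigma : Q -> Sigma -> Q -> S) (iota tau : Q -> S),
    [/\ reversible sigma,
        exists! q : Q, iota q != 0 &
        forall w, behaviour sigma iota tau w = r w].

Definition supp (S : pzSemiRingType) (Sigma : finType) (r : seq Sigma -> S) :
  pred (seq Sigma) := fun w => r w != 0.

Definition RevL1 (S : pzSemiRingType) (Sigma : finType) (L : pred (seq Sigma)) : Prop :=
  exists r : seq Sigma -> S, Rev1 r /\ supp r =1 L.

Definition charser (S : pzSemiRingType) (Sigma : finType) (L : pred (seq Sigma)) :
  seq Sigma -> S := fun w => if L w then 1 else 0.

(* Main.v *)
Require Import Defs.
From HB Require Import structures.
From mathcomp Require Import all_boot all_order all_algebra.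
Local Open Scope ring_scope.
Import GRing.Theory.

Section Aux.
Variables (S : nzSemiRingType) (Sigma : finType) (Q : finType).
Variables (sigma : Q -> Sigma -> Q -> Bsr) (iota tau : Q -> Bsr).

Definition phi (x : Bsr) : S := if x is B1 then 1 else 0.

Lemma phi_neq0 x : (phi x != 0) = (x != 0).
Proof. by case: x => /=; rewrite ?oner_neq0 ?eqxx. Qed.

Lemma phiM x y : phi (x * y) = phi x * phi y.
Proof. by case: x; case: y => /=; rewrite ?mul1r ?mul0r. Qed.

Lemma phi0 : phi 0 = 0. Proof. by []. Qed.

Let sigma' p a q := phi (sigma p a q).
Let iota' q := phi (iota q).
Let tau' q := phi (tau q).

Lemma is_run_phi p w qs : is_run sigma' p w qs = is_run sigma p w qs.
Proof.
elim: w p qs => [|a w IH] p [|q qs] //=.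
by rewrite IH /sigma' phi_neq0.
Qed.

Lemma pw_phi p w qs : path_weight sigma' tau' p w qs = phi (path_weight sigma tau p w qs).
Proof.
elim: w p qs => [|a w IH] p [|q qs] //=.
by rewrite IH phiM.
Qed.

Lemma run_uniq p w qs qs' : reversible sigma ->
  is_run sigma p w qs -> is_run sigma p w qs' -> qs = qs'.
Proof.
move=> [D _]; elim: w p qs qs' => [|a w IH] p [|q qs] [|q' qs'] //=.
move=> /andP[h1 r1] /andP[h2 r2].
have E := D _ _ _ _ h1 h2; subst q'.
by rewrite (IH _ _ _ r1 r2).
Qed.

Lemma beh_phi q0 w : reversible sigma -> (forall q, iota q != 0 -> q = q0) ->
  behaviour sigma' iota' tau' w = phi (behaviour sigma iota tau w).
Proof.
move=> Hr Hi; rewrite /behaviour.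
rewrite (bigD1 q0) //= [X in _ + X = _]big1; last first.
  move=> q Hq; apply: big1 => qs _.
  have : iota q = 0.
    by apply/eqP; apply/negPn/negP => /Hi E; move: Hq; rewrite E eqxx.
  by rewrite /iota' => ->; rewrite mul0r.
rewrite [X in phi X](bigD1 q0) //= [X in phi (_ + X)]big1; last first.
  move=> q Hq; apply: big1 => qs _.
  have : iota q = 0.
    by apply/eqP; apply/negPn/negP => /Hi E; move: Hq; rewrite E eqxx.
  by move=> ->; rewrite mul0r.
rewrite !addr0.
have [qs0 Hqs0|Hn] := pickP (fun qs : (size w).-tuple Q => is_run sigma q0 w qs).
  have Ep : forall qs : (size w).-tuple Q, is_run sigma' q0 w qs = (qs == qs0).
    move=> qs; rewrite is_run_phi; apply/idP/eqP => [H|->//].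
    by apply: val_inj; apply: run_uniq Hr H Hqs0.
  have Ep' : forall qs : (size w).-tuple Q, is_run sigma q0 w qs = (qs == qs0).
    by move=> qs; rewrite -is_run_phi.
  rewrite (eq_bigl _ _ Ep) (eq_bigl _ _ Ep') !big_pred1_eq.
  by rewrite pw_phi phiM.
rewrite big_pred0; last by move=> qs; rewrite is_run_phi Hn.
by rewrite big_pred0.
Qed.

End Aux.

Lemma part1 (S : nzSemiRingType) (Sigma : finType) (L : pred (seq Sigma)) :
  RevL1 Bsr L -> Rev1 (charser S L).
Proof.
case=> r [[Q [sigma [iota [tau [Hr [q0 [Hq0 Hu] Hb]]]]]] Hs].
have Hi : forall q, iota q != 0 -> q = q0 by move=> q /Hu ->.
exists Q, (fun p a q => phi S (sigma p a q)), (fun q => phi S (iota q)),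
  (fun q => phi S (tau q)); split.
- case: Hr => D1 D2; split.
    by move=> p q q' a; rewrite !phi_neq0; apply: D1.
  by move=> p p' q a; rewrite !phi_neq0; apply: D2.
- exists q0; split; first by rewrite phi_neq0.
  by move=> q; rewrite phi_neq0 => /Hi.
- move=> w; rewrite (@beh_phi S Sigma Q sigma iota tau q0 w Hr Hi) Hb /charser -(Hs w) /supp.
  by case: (r w).
Qed.

Theorem proposition3 (S : nzSemiRingType) (Sigma : finType)
  (HSigma : (0 < #|Sigma|)%N) (L : pred (seq Sigma)) :
  RevL1 Bsr L ->
  [/\ Rev1 (charser S L),
      RevL1 S L &
      forall L' : pred (seq Sigma), RevL1 Bsr L' -> RevL1 S L'].
Proof.
have gen : forall L' : pred (seq Sigma), RevL1 Bsr L' -> RevL1 S L'.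
  move=> L' H; exists (charser S L'); split; first exact: part1.
  by move=> w; rewrite /supp /charser; case: (L' w); rewrite ?oner_neq0 ?eqxx.
move=> H; split; [exact: part1 | exact: gen | exact: gen].
Qed.
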